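(* Let $\mathcal H_A,\mathcal H_B$ be finite-dimensional Hilbert spaces, $U$ a unitary on $\mathcal H_A\otimes\mathcal H_B$, $\alpha,\alpha'$ density operators on $\mathcal H_A$ and $\beta,\beta'$ density operators on $\mathcal H_B$, with at least one of $\alpha,\beta$ not maximally mixed, such that $U(\alpha\otimes\beta)U^\dagger=\alpha'\otimes\beta'$, and assume $\alpha'$ is invertible. Let $\mathcal E[X]=\operatorname{Tr}_B[U(X\otimes\beta)U^\dagger]$. Then $\mathcal E$ is tabletop reversible for the prior $\alpha$; specifically, its Petz recovery map satisfies $$\hat{\mathcal E}_\alpha[X]=\operatorname{Tr}_B\!\left[U^\dagger(X\otimes\beta')U\right]\quad\text{for all operators }X\text{ on }\mathcal H_A.$$
   Context: For a channel $\mathcal E$ and a density operator $\alpha$ with $\mathcal E[\alpha]$ invertible, the Petz recovery map is $\hat{\mathcal E}_\alpha[X]=\sqrt{\alpha}\,\mathcal E^\dagger[\mathcal E[\alpha]^{-1/2}X\mathcal E[\alpha]^{-1/2}]\sqrt\alpha$, where $\mathcal E^\dagger$ is the Hilbert–Schmidt adjoint ($\operatorname{Tr}(\mathcal E[X]Y)=\operatorname{Tr}(X\mathcal E^\dagger[Y])$). A channel $\mathcal E[X]=\operatorname{Tr}_B[U(X\otimes\beta)U^\dagger]$ is tabletop reversible for the prior $\alpha$ if there exists a density operator $\beta'$ on $\mathcal H_B$ with $\hat{\mathcal E}_\alpha[X]=\operatorname{Tr}_B[U^\dagger(X\otimes\beta')U]$ for the same $U$. *)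

(* Defs.v *)
From HB Require Import structures.
From mathcomp Require Import all_boot all_order all_algebra.
From mathcomp Require Import reals.
From mathcomp.real_closed Require Import complex mxtens.
From Stdlib Require Import ClassicalEpsilon.

Set Implicit Arguments.
Unset Strict Implicit.
Unset Printing Implicit Defensive.

Import Order.TTheory GRing.Theory Num.Theory.
Local Open Scope ring_scope.

Section QDefs.
Variable R : realType.
Local Notation C := R[i].

Definition adjmx m n (A : 'M[C]_(m, n)) : 'M[C]_(n, m) :=
  (map_mx (fun x : C => x^*) A)^T.

Definition psd n (A : 'M[C]_n) : Prop :=
  A = adjmx A /\ forall v : 'cV[C]_n, 0 <= (adjmx v *m A *m v) 0 0.

Definition density n (A : 'M[C]_n) : Prop := psd A /\ \tr A = 1.

Definition unitary n (U : 'M[C]_n) : Prop := U *m adjmx U = 1%:M.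

Definition maximally_mixed n (A : 'M[C]_n) : Prop := A = (n%:R)^-1%:M.

(* the positive square root sqrt(A): the (unique) psd S with S S = A
   (chosen classically; 0 if A is not psd) *)
Definition psd_sqrt n (A : 'M[C]_n) : 'M[C]_n :=
  match excluded_middle_informative (exists S : 'M[C]_n, psd S /\ S *m S = A) with
  | left h => proj1_sig (constructive_indefinite_description _ h)
  | right _ => 0
  end.

Definition ptraceB n m (M : 'M[C]_(n * m)) : 'M[C]_n :=
  \matrix_(i, j) \sum_(k < m) M (mxtens_index (i, k)) (mxtens_index (j, k)).

(* Hilbert-Schmidt adjoint of a linear map f, characterised by
   Tr(f X * Y) = Tr(X * f^dag Y); written out on matrix units *)
Definition hs_adjoint n p (f : 'M[C]_n -> 'M[C]_p) (Y : 'M[C]_p) : 'M[C]_n :=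
  \matrix_(i, j) \tr (f (delta_mx j i) *m Y).

Definition channel n m (U : 'M[C]_(n * m)) (beta : 'M[C]_m) (X : 'M[C]_n)
  : 'M[C]_n := ptraceB (U *m (X *t beta) *m adjmx U).

Definition petz n (E : 'M[C]_n -> 'M[C]_n) (alpha X : 'M[C]_n) : 'M[C]_n :=
  let T := invmx (psd_sqrt (E alpha)) in
  psd_sqrt alpha *m hs_adjoint E (T *m X *m T) *m psd_sqrt alpha.

Definition tabletop_reversible n m (U : 'M[C]_(n * m)) (beta : 'M[C]_m)
  (alpha : 'M[C]_n) : Prop :=
  channel U beta alpha \in unitmx /\
  exists beta' : 'M[C]_m, density beta' /\
    forall X : 'M[C]_n,
      petz (channel U beta) alpha X = ptraceB (adjmx U *m (X *t beta') *m U).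
End QDefs.

(* Main.v *)
Require Import Defs.
From HB Require Import structures.
From mathcomp Require Import all_boot all_order all_algebra.
From mathcomp Require Import reals.
From mathcomp.real_closed Require Import complex mxtens.
From mathcomp Require Import spectral sesquilinear.
From Stdlib Require Import ClassicalEpsilon.

Import Order.TTheory GRing.Theory Num.Theory.
Local Open Scope ring_scope.

Module QAux.
Import Num.Def.
Section Aux.
Variable R : realType.
Local Notation C := R[i].

Lemma adjmxE m n (A : 'M[C]_(m, n)) : adjmx A = (A ^t conjC)%sesqui.
Proof. by rewrite /adjmx map_trmx. Qed.

Lemma adjmxK m n (A : 'M[C]_(m, n)) : adjmx (adjmx A) = A.
Proof. by apply/matrixP => i j; rewrite !mxE conjCK. Qed.

Lemma adjmxM m n p (A : 'M[C]_(m, n)) (B : 'M[C]_(n, p)) :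
  adjmx (A *m B) = adjmx B *m adjmx A.
Proof.
apply/matrixP => i j; rewrite !mxE rmorph_sum; apply: eq_bigr => k _.
by rewrite !mxE rmorphM mulrC.
Qed.

Lemma adjmxD m n (A B : 'M[C]_(m, n)) : adjmx (A + B) = adjmx A + adjmx B.
Proof. by apply/matrixP => i j; rewrite !mxE rmorphD. Qed.

Lemma adjmx_scalar n (a : C) : adjmx (a%:M : 'M_n) = (a^*)%:M.
Proof.
by apply/matrixP => i j; rewrite !mxE rmorphMn eq_sym.
Qed.

Lemma adjmx_tens m n p q (A : 'M[C]_(m, n)) (B : 'M[C]_(p, q)) :
  adjmx (A *t B) = adjmx A *t adjmx B.
Proof. by apply/matrixP => i j; rewrite !mxE rmorphM. Qed.

Lemma sum_tens n m (F : 'I_(n * m) -> C) :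
  \sum_k F k = \sum_i \sum_j F (mxtens_index (i, j)).
Proof.
rewrite pair_big /=; apply: reindex => /=.
exists (@mxtens_unindex n m) => [[a b] _|k _] /=; first by rewrite mxtens_indexK.
exact: mxtens_unindexK.
Qed.

Lemma sum_delta n (k : 'I_n) (f : 'I_n -> C) :
  \sum_l ((k == l)%:R * f l) = f k.
Proof.
rewrite (bigD1 k) //= eqxx mul1r big1 ?addr0 // => l /negbTE.
by rewrite eq_sym => ->; rewrite mul0r.
Qed.

Lemma ptraceB_tens n m (X : 'M[C]_n) (Y : 'M[C]_m) :
  ptraceB (X *t Y) = \tr Y *: X.
Proof.
apply/matrixP => i j; rewrite !mxE.
under eq_bigr do rewrite tensmxE.
by rewrite -mulr_sumr mulrC.
Qed.

Lemma mulmx_tens_entry n m p q (M : 'M[C]_(p, n * m)) (N : 'M[C]_(n * m, q)) r c :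
  (M *m N) r c = \sum_i \sum_l M r (mxtens_index (i, l)) * N (mxtens_index (i, l)) c.
Proof. by rewrite mxE sum_tens. Qed.

Lemma ptraceB_mull n m (A : 'M[C]_n) (M : 'M[C]_(n * m)) :
  ptraceB ((A *t (1%:M : 'M_m)) *m M) = A *m ptraceB M.
Proof.
apply/matrixP => i j; rewrite !mxE.
under eq_bigr => k _ do rewrite mulmx_tens_entry.
under [RHS]eq_bigr => p _ do rewrite mxE mulr_sumr.
rewrite exchange_big /=; apply: eq_bigr => p _; apply: eq_bigr => k _.
under eq_bigr do rewrite tensmxE mxE.
rewrite (bigD1 k) //= eqxx mulr1 big1 ?addr0 // => l /negbTE; rewrite eq_sym => ->; by rewrite mulr0 mul0r.
Qed.

Lemma ptraceB_mulr n m (A : 'M[C]_n) (M : 'M[C]_(n * m)) :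
  ptraceB (M *m (A *t (1%:M : 'M_m))) = ptraceB M *m A.
Proof.
apply/matrixP => i j; rewrite !mxE.
under eq_bigr => k _ do rewrite mulmx_tens_entry.
under [RHS]eq_bigr => p _ do rewrite mxE mulr_suml.
rewrite exchange_big /=; apply: eq_bigr => p _; apply: eq_bigr => k _.
under eq_bigr do rewrite tensmxE mxE.
rewrite (bigD1 k) //= eqxx mulr1 big1 ?addr0 // => l /negbTE.
by rewrite eq_sym => ->; rewrite mulr0 mulr0.
Qed.

Lemma ptraceB_cyc n m (B : 'M[C]_m) (M : 'M[C]_(n * m)) :
  ptraceB (((1%:M : 'M_n) *t B) *m M) = ptraceB (M *m ((1%:M : 'M_n) *t B)).
Proof.
apply/matrixP => i j; rewrite !mxE.
under eq_bigr => k _ do rewrite mulmx_tens_entry.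
under [RHS]eq_bigr => k _ do rewrite mulmx_tens_entry.
have E1 : forall k, \sum_p \sum_l ((1%:M : 'M_n) *t B) (mxtens_index (i, k)) (mxtens_index (p, l)) *
   M (mxtens_index (p, l)) (mxtens_index (j, k)) = \sum_l B k l * M (mxtens_index (i, l)) (mxtens_index (j, k)).
  move=> k; rewrite (bigD1 i) //= [X in _ + X]big1 ?addr0; last first.
    move=> p /negbTE pi; apply: big1 => l _; rewrite tensmxE mxE eq_sym pi.
    by rewrite mulr0n mul0r mul0r.
  by apply: eq_bigr => l _; rewrite tensmxE mxE eqxx mul1r.
have E2 : forall k, \sum_p \sum_l M (mxtens_index (i, k)) (mxtens_index (p, l)) *
   ((1%:M : 'M_n) *t B) (mxtens_index (p, l)) (mxtens_index (j, k)) = \sum_l M (mxtens_index (i, k)) (mxtens_index (j, l)) * B l k.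
  move=> k; rewrite (bigD1 j) //= [X in _ + X]big1 ?addr0; last first.
    move=> p /negbTE pj; apply: big1 => l _; rewrite tensmxE mxE pj.
    by rewrite mulr0n mul0r mulr0.
  by apply: eq_bigr => l _; rewrite tensmxE mxE eqxx mul1r.
under eq_bigr do rewrite E1.
under [RHS]eq_bigr do rewrite E2.
rewrite exchange_big /=; apply: eq_bigr => k _; apply: eq_bigr => l _.
by rewrite mulrC.
Qed.

Lemma tr_ptraceB n m (M : 'M[C]_(n * m)) (Y : 'M[C]_n) :
  \tr (ptraceB M *m Y) = \tr (M *m (Y *t (1%:M : 'M_m))).
Proof.
rewrite /mxtrace.
under eq_bigr => i _ do rewrite mxE.
under eq_bigr => i _ do under eq_bigr => j _ do rewrite mxE mulr_suml.
rewrite sum_tens.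
under [RHS]eq_bigr => i _ do under eq_bigr => k _ do rewrite mulmx_tens_entry.
apply: eq_bigr => i _.
rewrite exchange_big /=; apply: eq_bigr => k _; apply: eq_bigr => j _.
under eq_bigr do rewrite tensmxE mxE.
rewrite (bigD1 k) //= eqxx mulr1 big1 ?addr0 // => l /negbTE.
by rewrite eq_sym => ->; rewrite mulr0 mulr0.
Qed.

Lemma tr_delta_tens n m (N : 'M[C]_(n * m)) i j :
  \tr ((delta_mx j i *t (1%:M : 'M_m)) *m N) = ptraceB N i j.
Proof.
rewrite /mxtrace sum_tens mxE.
rewrite (bigD1 j) //= [X in _ + X]big1 ?addr0; last first.
  move=> p /negbTE pj; apply: big1 => k _; rewrite mulmx_tens_entry.
  apply: big1 => q _; apply: big1 => l _; rewrite tensmxE !mxE pj /=.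
  by rewrite mul0r mul0r.
apply: eq_bigr => k _; rewrite mulmx_tens_entry.
rewrite (bigD1 i) //= [X in _ + X]big1 ?addr0; last first.
  move=> q /negbTE qi; apply: big1 => l _; rewrite tensmxE !mxE qi andbF /=.
  by rewrite mul0r mul0r.
rewrite (bigD1 k) //= [X in _ + X]big1 ?addr0; last first.
  move=> l /negbTE lk; rewrite tensmxE !mxE eq_sym lk.
  by rewrite mulr0n mulr0 mul0r.
by rewrite tensmxE !mxE !eqxx /= mulr1 mul1r.
Qed.

End Aux.

Section Aux2.
Variable R : realType.
Local Notation C := R[i].

Lemma dot_ge0 n (w : 'cV[C]_n) : 0 <= (adjmx w *m w) 0 0.
Proof.
rewrite mxE; apply: sumr_ge0 => k _; rewrite !mxE mulrC; exact: mul_conjC_ge0.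
Qed.

Lemma dot_eq0 n (w : 'cV[C]_n) : (adjmx w *m w) 0 0 = 0 -> w = 0.
Proof.
rewrite mxE => H; apply/matrixP => k l; rewrite [l]ord1 mxE.
have Hge : forall j, true -> 0 <= adjmx w 0 j * w j 0.
  by move=> j _; rewrite !mxE mulrC mul_conjC_ge0.
have := psumr_eq0P Hge H (i:=k) isT.
by rewrite !mxE mulrC => /eqP; rewrite mul_conjC_eq0 => /eqP.
Qed.

Lemma adjmx_diag n (d : 'rV[C]_n) : (forall k, 0 <= d 0 k) ->
  adjmx (diag_mx d) = diag_mx d.
Proof.
move=> d0; apply/matrixP => i j; rewrite !mxE eq_sym.
case: eqP => [->|_]; last by rewrite !mulr0n conjC0.
by rewrite !mulr1n geC0_conj.
Qed.

Lemma diag_form n (w : 'cV[C]_n) (d : 'rV[C]_n) :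
  (adjmx w *m diag_mx d *m w) 0 0 = \sum_k (w k 0)^* * d 0 k * w k 0.
Proof. by rewrite mul_mx_diag mxE; apply: eq_bigr => k _; rewrite !mxE. Qed.

Lemma psd_form n (W : 'M[C]_n) (d : 'rV[C]_n) : (forall k, 0 <= d 0 k) ->
  psd (adjmx W *m diag_mx d *m W).
Proof.
move=> d0; split.
  by rewrite !adjmxM adjmxK adjmx_diag // mulmxA.
move=> v; rewrite -!mulmxA [diag_mx d *m _]mulmxA !mulmxA -adjmxM -mulmxA.
rewrite diag_form; apply: sumr_ge0 => k _.
by rewrite mulrAC mulr_ge0 // mulrC mul_conjC_ge0.
Qed.

Lemma psd_decomp n (A : 'M[C]_n) : psd A ->
  exists P : 'M[C]_n, exists d : 'rV[C]_n,
    [/\ P *m adjmx P = 1%:M, forall k, 0 <= d 0 k & A = adjmx P *m diag_mx d *m P].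
Proof.
move=> [Ah Apos].
have Aherm : A \is hermsymmx.
  by apply/is_hermitianmxP; rewrite expr0 scale1r -adjmxE -Ah.
have /orthomx_spectralP Aeq := hermitian_normalmx Aherm.
set P := spectralmx A in Aeq; set d := spectral_diag A in Aeq.
have Pu : P \is unitarymx by exact: spectral_unitarymx.
have PP : P *m adjmx P = 1%:M by rewrite adjmxE; apply/unitarymxP.
rewrite invmx_unitary // -adjmxE in Aeq.
exists P, d; split => // k.
have := Apos (adjmx P *m delta_mx k 0).
set e : 'cV[C]_n := delta_mx k 0.
have -> : adjmx (adjmx P *m e) *m A *m (adjmx P *m e) = adjmx e *m diag_mx d *m e.
  rewrite adjmxM adjmxK Aeq !mulmxA -(mulmxA (adjmx e) P (adjmx P)) PP mulmx1.
  by rewrite -(mulmxA _ P (adjmx P)) PP mulmx1.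
rewrite /e.
rewrite diag_form (bigD1 k) //= [X in _ + X]big1 ?addr0.
  by rewrite !mxE !eqxx /= conjC1 mul1r mulr1.
by move=> j /negbTE jk; rewrite !mxE jk /= mulr0.
Qed.

Lemma adjmxK_unit n (P : 'M[C]_n) : P *m adjmx P = 1%:M -> adjmx P *m P = 1%:M.
Proof. exact: mulmx1C. Qed.

Lemma psd_sqrt_exists n (A : 'M[C]_n) : psd A -> exists S, psd S /\ S *m S = A.
Proof.
move=> /psd_decomp [P [d [PP d0 ->]]].
pose r : 'rV[C]_n := \row_k sqrtC (d 0 k).
have r0 : forall k, 0 <= r 0 k by move=> k; rewrite mxE sqrtC_ge0.
exists (adjmx P *m diag_mx r *m P); split; first exact: psd_form.
rewrite !mulmxA -(mulmxA _ P (adjmx P)) PP mulmx1 -(mulmxA (adjmx P) (diag_mx r) (diag_mx r)) mulmx_diag.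
congr (_ *m diag_mx _ *m _); apply/rowP => k; rewrite !mxE -expr2 sqrtCK.
by [].
Qed.

Lemma psd_sqrt_spec n (A : 'M[C]_n) : psd A ->
  psd (psd_sqrt A) /\ psd_sqrt A *m psd_sqrt A = A.
Proof.
move=> Apsd; rewrite /psd_sqrt; case: excluded_middle_informative => [h|nh].
  by case: constructive_indefinite_description.
by exfalso; apply: nh; exact: psd_sqrt_exists.
Qed.

Lemma psd_eig n (S : 'M[C]_n) (t : C) (v : 'cV[C]_n) : psd S -> 0 <= t ->
  S *m (S *m v) = (t * t) *: v -> S *m v = t *: v.
Proof.
move=> [Sh Spos] t0 SSv.
have [t00|tn0] := eqVneq t 0.
  move: SSv; rewrite t00 mulr0 !scale0r => SSv.
  apply: dot_eq0.
  by rewrite adjmxM -Sh -mulmxA SSv mulmx0 mxE.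
set w := S *m v - t *: v.
have Sw : S *m w = - t *: w.
  rewrite /w mulmxBr SSv -scalemxAr.
  by rewrite scalerBr !scaleNr scalerA opprK addrC.
suff : w = 0 by move/eqP; rewrite subr_eq0 => /eqP.
apply: dot_eq0.
have := Spos w; rewrite -mulmxA Sw -scalemxAr mxE => H.
have D := @dot_ge0 _ w.
have : t * (adjmx w *m w) 0 0 == 0.
  rewrite eq_le mulr_ge0 // andbT -oppr_ge0 -mulNr.
  by [].
by rewrite mulf_eq0 (negbTE tn0) => /eqP.
Qed.

Lemma mx_col_eq m n (A B : 'M[C]_(m, n)) :
  (forall b, A *m (delta_mx b 0 : 'cV_n) = B *m (delta_mx b 0 : 'cV_n)) -> A = B.
Proof.
move=> H; apply/matrixP => a b.
by have := congr1 (fun M : 'cV[C]_m => M a 0) (H b); rewrite -!colE !mxE.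
Qed.

Lemma diag_delta n (d : 'rV[C]_n) b :
  diag_mx d *m (delta_mx b 0 : 'cV_n) = d 0 b *: (delta_mx b 0 : 'cV_n).
Proof.
apply/matrixP => x y; rewrite mul_diag_mx !mxE.
by case: (eqVneq x b) => [->|_]; rewrite /= ?mulr0.
Qed.

Lemma psd_uniq n (S T : 'M[C]_n) : psd S -> psd T -> S *m S = T *m T -> S = T.
Proof.
move=> Spsd Tpsd SST.
have [P [t [PP t0 Teq]]] := @psd_decomp _ _ Tpsd.
have PP' := mulmx1C PP.
have TV : T *m adjmx P = adjmx P *m diag_mx t.
  by rewrite Teq -!mulmxA PP mulmx1.
have SV : S *m adjmx P = adjmx P *m diag_mx t.
  apply: mx_col_eq => b.
  rewrite -!mulmxA diag_delta -scalemxAr.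
  apply: psd_eig => //.
  rewrite !mulmxA SST -(mulmxA T T) TV (mulmxA T) TV -!mulmxA diag_delta.
  by rewrite -!scalemxAr diag_delta -!scalemxAr scalerA.


by rewrite -[S]mulmx1 -PP' mulmxA SV Teq.
Qed.

Lemma psd_sqrt_eq n (S : 'M[C]_n) : psd S -> psd_sqrt (S *m S) = S.
Proof.
move=> Spsd; rewrite /psd_sqrt; case: excluded_middle_informative => [h|nh].
  case: constructive_indefinite_description => S' [S'psd E] /=.
  exact: psd_uniq.
by exfalso; apply: nh; exists S.
Qed.

Lemma diag_tens n m (d : 'rV[C]_n) (e : 'rV[C]_m) :
  diag_mx d *t diag_mx e =
  diag_mx (\row_k (d 0 (mxtens_unindex k).1 * e 0 (mxtens_unindex k).2)).
Proof.
apply/matrixP => r c.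
case: (mxtens_indexP r) => i k; case: (mxtens_indexP c) => j l.
rewrite tensmxE !mxE mxtens_indexK /=.
rewrite (inj_eq (can_inj (@mxtens_indexK n m))) xpair_eqE.
by case: (i == j); case: (k == l); rewrite ?mulr0n ?mulr1n ?mulr0 ?mul0r.
Qed.

Lemma psd_tens n m (a : 'M[C]_n) (b : 'M[C]_m) : psd a -> psd b -> psd (a *t b).
Proof.
move=> /psd_decomp [P [d [_ d0 ->]]] /psd_decomp [Q [e [_ e0 ->]]].
rewrite -!tensmx_mul -adjmx_tens diag_tens.
apply: psd_form => k; rewrite mxE; exact: mulr_ge0.
Qed.

Lemma psd_conj n (W S : 'M[C]_n) : psd S -> psd (W *m S *m adjmx W).
Proof.
move=> [Sh Spos]; split.
  by rewrite !adjmxM adjmxK -Sh mulmxA.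
move=> v; have := Spos (adjmx W *m v).
by rewrite adjmxM adjmxK !mulmxA.
Qed.

End Aux2.

End QAux.
Import QAux.

Lemma hs_channel (R : realType) n m (U : 'M[R[i]]_(n * m)) (beta : 'M[R[i]]_m) Y :
  hs_adjoint (channel U beta) Y =
  ptraceB (((1%:M : 'M_n) *t beta) *m (adjmx U *m (Y *t (1%:M : 'M_m)) *m U)).
Proof.
apply/matrixP => i j; rewrite mxE /channel tr_ptraceB -tr_delta_tens.
rewrite [in RHS]mulmxA [in RHS]tensmx_mul mulmx1 mul1mx.
by rewrite -!mulmxA mxtrace_mulC !mulmxA.
Qed.

Theorem theorem3 (R : realType) (n m : nat) (U : 'M[R[i]]_(n * m))
  (alpha alpha' : 'M[R[i]]_n) (beta beta' : 'M[R[i]]_m) :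
  unitary U ->
  density alpha -> density alpha' -> density beta -> density beta' ->
  ~ (maximally_mixed alpha /\ maximally_mixed beta) ->
  U *m (alpha *t beta) *m adjmx U = alpha' *t beta' ->
  alpha' \in unitmx ->
  tabletop_reversible U beta alpha /\
  (forall X : 'M[R[i]]_n,
     petz (channel U beta) alpha X = ptraceB (adjmx U *m (X *t beta') *m U)).
Proof.
move=> HU [Ha _] [Ha' _] [Hb _] [Hb' trb'] _ Heq Hinv.
have HU' : adjmx U *m U = 1%:M by exact: mulmx1C.
have Ealpha : channel U beta alpha = alpha'.
  by rewrite /channel Heq ptraceB_tens trb' scale1r.
have [asd aa] := @psd_sqrt_spec _ _ _ Ha.
have [bsd bb] := @psd_sqrt_spec _ _ _ Hb.
have [a'sd a'a'] := @psd_sqrt_spec _ _ _ Ha'.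
have [b'sd b'b'] := @psd_sqrt_spec _ _ _ Hb'.
set a := psd_sqrt alpha in asd aa *.
set b := psd_sqrt beta in bsd bb *.
set a' := psd_sqrt alpha' in a'sd a'a' *.
set b' := psd_sqrt beta' in b'sd b'b' *.
have key : U *m (a *t b) *m adjmx U = a' *t b'.
  apply: psd_uniq; first exact/psd_conj/psd_tens.
    exact: psd_tens.
  rewrite !tensmx_mul a'a' b'b' -Heq -aa -bb -tensmx_mul.
  rewrite !mulmxA -(mulmxA _ (adjmx U) U) HU' mulmx1 -!mulmxA.
  by rewrite (mulmxA (a *t b) (a *t b)).
have KU' : (a *t b) *m adjmx U = adjmx U *m (a' *t b').
  by rewrite -key !mulmxA HU' mul1mx.
have KU : U *m (a *t b) = (a' *t b') *m U.
  by rewrite -key -(mulmxA (U *m (a *t b))) HU' mulmx1.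
have a'u : a' \in unitmx by move: Hinv; rewrite -a'a' unitmx_mul => /andP[].
have main : forall X : 'M[R[i]]_n,
    petz (channel U beta) alpha X = ptraceB (adjmx U *m (X *t beta') *m U).
  move=> X; rewrite /petz Ealpha -/a' hs_channel.
  set Y := invmx a' *m X *m invmx a'.
  set K := adjmx U *m (Y *t 1%:M) *m U.
  rewrite -/a -ptraceB_mull -ptraceB_mulr.
  have E1 : (a *t 1%:M) *m ((1%:M *t beta) *m K) = (1%:M *t b) *m ((a *t b) *m K).
    by rewrite !mulmxA !tensmx_mul !mulmx1 !mul1mx bb.
  rewrite E1 -(mulmxA (1%:M *t b)) ptraceB_cyc.
  have E2 : (a *t 1%:M) *m (1%:M *t b) = a *t b by rewrite tensmx_mul mulmx1 mul1mx.
  rewrite -!mulmxA E2 KU (mulmxA (a *t b) (adjmx U)) KU' -!mulmxA.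
  rewrite (mulmxA (Y *t 1%:M)) tensmx_mul (mulmxA (a' *t b')) tensmx_mul.
  rewrite mul1mx b'b'.
  have -> : a' *m (Y *m a') = X.
    by rewrite /Y mulmxKV // mulKVmx.
  by rewrite !mulmxA.

split=> //; split; first by rewrite Ealpha.
by exists beta'; split.
Qed.
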